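(* Let $k$ be a positive integer, $a=3k+2$, $b=2a-3$, $c=2a-1$, $S=\{a,b,c\}$, $G=\langle S\rangle$. For $i\in[0,2k+1]$ let $I_{i,k}=\{ia-3\lfloor i/2\rfloor\}\cup[ia-3\lfloor i/2\rfloor+2,\,ia]$, and let $H_{9,k}=\bigcup_{i=0}^{2k+1}I_{i,k}\cup[2ka+4,\infty[$. Then: (1) $x\in G$ if and only if $x=(s+2q)a-3q+2r$ for some $q,r,s\in\mathbb{N}$ with $0\le r\le q$; (2) $I_{i,k}<I_{i+1,k}$ for every $i\in[0,2k]$; (3) $G=H_{9,k}$; (4) $H_{9,k}$ is a $3$-permutation numerical semigroup.
   Context: $\mathbb{N}=\{0,1,2,\dots\}$. A numerical semigroup is a submonoid $G$ of $(\mathbb{N},+,0)$ with $\mathbb{N}\setminus G$ finite; $\langle S\rangle$ is the submonoid generated by $S$. Writing the elements of a numerical semigroup as $0=g_0<g_1<g_2<\cdots$, it is an $n$-permutation numerical semigroup if it is generated by $\{g_1,\dots,g_n\}$ and for every $k\in\mathbb{N}$ the tuple $(g_{kn+1}\bmod n,\dots,g_{kn+n}\bmod n)$ contains exactly one representative of each residue class mod $n$. Notation: $[u,v]=\{x\in\mathbb{N}:u\le x\le v\}$ (empty if $u>v$), $[u,\infty[=\{x\in\mathbb{N}:x\ge u\}$; for nonempty $X,Y$, $X<Y$ means $x<y$ for all $x\in X,y\in Y$. *)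

(* Defs.v *)
From mathcomp Require Import all_boot.
Set Implicit Arguments. Unset Strict Implicit. Unset Printing Implicit Defensive.

Inductive gen (S : nat -> Prop) : nat -> Prop :=
| gen0 : gen S 0
| genS : forall x y, S x -> gen S y -> gen S (x + y).

Definition submonoid (G : nat -> Prop) : Prop :=
  G 0 /\ (forall x y, G x -> G y -> G (x + y)).

Definition numerical_semigroup (G : nat -> Prop) : Prop :=
  submonoid G /\ exists N, forall x, N <= x -> G x.

Definition rank_below (G : nat -> Prop) (x j : nat) : Prop :=
  exists s : seq nat, [/\ uniq s, (forall y, y \in s <-> (y < x /\ G y))
                       & size s = j].

(* elem G j x : x = g_j, the j-th element (from g_0 = 0) of G in increasing order *)
Definition elem (G : nat -> Prop) (j x : nat) : Prop := G x /\ rank_below G x j.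

Definition perm_num_semigroup (n : nat) (G : nat -> Prop) : Prop :=
  [/\ numerical_semigroup G,
      (forall x, G x <-> gen (fun y => exists2 i, 1 <= i <= n & elem G i y) x)
    & forall m r, r < n ->
        exists! i, (1 <= i <= n) /\ exists2 x, elem G (m * n + i) x & x %% n = r].

Definition Iik (k i : nat) (x : nat) : Prop :=
  let a := 3 * k + 2 in
  x = i * a - 3 * (i %/ 2) \/ (i * a - 3 * (i %/ 2) + 2 <= x <= i * a).

Definition H9 (k : nat) (x : nat) : Prop :=
  (exists2 i, i <= 2 * k + 1 & Iik k i x) \/ 2 * k * (3 * k + 2) + 4 <= x.

(* Main.v *)
Require Import Defs.
From mathcomp Require Import all_boot zify.
From Stdlib Require Import Lia.

Definition Sabc k x := x = 3*k+2 \/ x = 2*(3*k+2) - 3 \/ x = 2*(3*k+2) - 1.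

Lemma gen_add S x y : gen S x -> gen S y -> gen S (x + y).
Proof. elim=> [|x' y' Sx _ IH] Gy; first by rewrite add0n. rewrite -addnA; exact: genS Sx (IH Gy). Qed.

Lemma gen_mul S g n : S g -> gen S (n * g).
Proof. move=> Sg; elim: n => [|n IH]; first by rewrite mul0n; exact: gen0.
rewrite mulSn; exact: genS. Qed.

Lemma gen_ext S S' : (forall x, S x <-> S' x) -> forall x, gen S x <-> gen S' x.
Proof. move=> E x; split; elim=> [|x' y' Sx _ IH]; try exact: gen0;
  apply: genS IH; apply/E; exact: Sx. Qed.

Lemma part1 k x : gen (Sabc k) x <->
  exists q r s, r <= q /\ x = (s + 2 * q) * (3*k+2) - 3 * q + 2 * r.
Proof.
split.
- elim=> [|x' y' Sx _ [q [r [s [hr ->]]]]]; first by exists 0, 0, 0; split.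
  have h : 3 * q <= (s + 2 * q) * (3 * k + 2) by nia.
  case: Sx => [->|[->|->]].
  + exists q, r, s.+1; split => //; lia.
  + exists q.+1, r, s; split => //; lia.
  + exists q.+1, r.+1, s; split => //; lia.
- move=> [q [r [s [hr ->]]]].
  have [d ->] : exists d, q = r + d by exists (q - r); lia.
  have -> : (s + 2 * (r + d)) * (3 * k + 2) - 3 * (r + d) + 2 * r
     = s * (3*k+2) + (d * (2*(3*k+2)-3) + r * (2*(3*k+2)-1)).
    have -> : 2*(3*k+2)-3 = 6*k+1 by lia.
    have -> : 2*(3*k+2)-1 = 6*k+3 by lia.
    nia.
  apply: gen_add; first by apply: gen_mul; left.
  apply: gen_add; apply: gen_mul; right; [left|right]; done.
Qed.

Lemma repr k i e : e <= 3 * (i %/ 2) -> e + 1 <> 3 * (i %/ 2) ->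
  gen (Sabc k) (i * (3*k+2) - e).
Proof.
move=> h1 h2; apply/part1.
have [w [rho [He Hr]]] : exists w rho, e = 3*w+rho /\ rho < 3
  by exists (e %/ 3), (e %% 3); lia.
have hq : forall q, 2 * q <= i -> 3 * q <= i * (3*k+2) by move=> q hq; nia.
case: rho Hr He => [|[|[|]]] // _ He.
- exists w, 0, (i - 2 * w); split => //.
  have := hq w; have -> : i - 2 * w + 2 * w = i by lia. lia.
- exists w.+1, 1, (i - 2 * w.+1); split => //.
  have := hq w.+1; have -> : i - 2 * w.+1 + 2 * w.+1 = i by lia. lia.
- exists w.+2, 2, (i - 2 * w.+2); split => //.
  have := hq w.+2; have -> : i - 2 * w.+2 + 2 * w.+2 = i by lia. lia.
Qed.

Lemma IikE k i x : Iik k i x <->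
  x = i * (3*k+2) - 3 * (i %/ 2) \/ (i * (3*k+2) - 3 * (i %/ 2) + 2 <= x <= i * (3*k+2)).
Proof. by []. Qed.

Lemma H9E k x : H9 k x <->
  (exists2 i, i <= 2 * k + 1 & Iik k i x) \/ 2 * k * (3 * k + 2) + 4 <= x.
Proof. by []. Qed.

Lemma part2 k i : i <= 2 * k -> forall x y, Iik k i x -> Iik k i.+1 y -> x < y.
Proof. move=> hi x y /IikE hx /IikE hy; lia. Qed.

Lemma key k j j' : j < j' -> j' <= 2 * k + 1 -> j * (3*k+2) < j' * (3*k+2) - 3 * (j' %/ 2).
Proof.
move=> hj hj'; have [d ed] : exists d, j' = j.+1 + d by exists (j' - j.+1); lia.
subst j'. have : 3*k+2 <= d.+1 * (3*k+2) by rewrite leq_pmull.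
lia.
Qed.

Lemma mi_mono k i j : 0 < k -> i <= j -> i * (3*k+2) - 3 * (i %/ 2) <= j * (3*k+2) - 3 * (j %/ 2).
Proof.
move=> hk hij; have [d ->] : exists d, j = i + d by exists (j - i); lia.
have : d <= d * k by rewrite leq_pmulr. have := leq0n (i * k). lia.
Qed.

Lemma part3f k x : 0 < k -> gen (Sabc k) x -> H9 k x.
Proof.
move=> hk /part1 [q [r [s [hr ->]]]].
case: (leqP (s + 2 * q) (2 * k + 1)) => hn.
- left; exists (s + 2 * q) => //; apply/IikE.
  have h : 3 * q <= (s + 2 * q) * (3 * k + 2) by nia.
  have [[hq hr0]|hh] : (q = (s + 2 * q) %/ 2 /\ r = 0) \/ ~ (q = (s + 2 * q) %/ 2 /\ r = 0) by lia.
  + left; rewrite -hq hr0; lia.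
  + right; lia.
- right.
  have : (2*k+2)*(6*k+1) <= (s + 2*q) * (6*k+1) by rewrite leq_mul2r; lia.
  lia.
Qed.

Lemma tail k x : 0 < k -> 2 * k * (3 * k + 2) + 4 <= x -> gen (Sabc k) x.
Proof.
move=> hk hx.
have ha : 0 < 3 * k + 2 by lia.
have E := divn_eq x (3*k+2); have R := ltn_pmod x ha.
move: E R; set d := x %/ _; set rho := x %% _ => E R; clearbody d rho.
case: (posnP rho) => hr.
- have -> : x = d * (3*k+2) - 0 by lia.
  apply: repr; lia.
- have hd : 2 * k <= d.
    rewrite leqNgt; apply/negP => hd.
    have : d.+1 * (3*k+2) <= 2 * k * (3*k+2) by rewrite leq_mul2r; lia.
    lia.
  have -> : x = d.+1 * (3*k+2) - (3*k+2 - rho) by lia.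
  apply: repr.
  + have [ed|hd'] : d = 2 * k \/ 2 * k < d by lia.
    * subst d; lia.
    * lia.
  + have [ed|hd'] : d = 2 * k \/ 2 * k < d by lia.
    * subst d; lia.
    * lia.
Qed.

Lemma part3b k x : 0 < k -> H9 k x -> gen (Sabc k) x.
Proof.
move=> hk [[i hi /IikE [->|hx]]|hx]; last exact: tail.
- apply: repr; lia.
- have -> : x = i * (3*k+2) - (i * (3*k+2) - x) by lia.
  apply: repr; lia.
Qed.

Lemma part3 k x : 0 < k -> gen (Sabc k) x <-> H9 k x.
Proof. move=> hk; split; [exact: part3f | exact: part3b]. Qed.


Set Implicit Arguments. Unset Strict Implicit.
Definition Ib k i x := (x == i * (3*k+2) - 3 * (i %/ 2)) ||
  (i * (3*k+2) - 3 * (i %/ 2) + 2 <= x <= i * (3*k+2)).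
Definition hb k x := has (fun i => Ib k i x) (iota 0 (2 * k + 2)) ||
  (2 * k * (3 * k + 2) + 4 <= x).

Lemma hbP k x : reflect (H9 k x) (hb k x).
Proof.
apply: (iffP orP).
- case=> [/hasP [i]|h]; last by right.
  rewrite mem_iota add0n => hi /orP h; left; exists i; first lia.
  apply/IikE; case: h => [/eqP|]; [left|right]; done.
- case=> [[i hi /IikE h]|h]; last by right.
  left; apply/hasP; exists i; first by rewrite mem_iota; lia.
  apply/orP; case: h => [->|]; [left|right]; done.
Qed.

Definition cnt k x := count (hb k) (iota 0 x).

Lemma cntS k x : cnt k x.+1 = cnt k x + hb k x.
Proof. by rewrite /cnt -addn1 iotaD count_cat /= addn0 add0n. Qed.

Lemma cnt0 k : cnt k 0 = 0. Proof. by []. Qed.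

Lemma cnt_in k x : H9 k x -> cnt k x.+1 = (cnt k x).+1.
Proof. by move/hbP => h; rewrite cntS h addn1. Qed.

Lemma cnt_out k x : ~ H9 k x -> cnt k x.+1 = cnt k x.
Proof. by move/hbP/negbTE => h; rewrite cntS h addn0. Qed.

Lemma cnt_run_in k u n : (forall t, u <= t < u + n -> H9 k t) -> cnt k (u + n) = cnt k u + n.
Proof.
elim: n => [|n IH] h; first by rewrite !addn0.
rewrite addnS cnt_in; last by apply: h; lia.
rewrite IH ?addnS // => t ht; apply: h; lia.
Qed.

Lemma cnt_run_out k u n : (forall t, u <= t < u + n -> ~ H9 k t) -> cnt k (u + n) = cnt k u.
Proof.
elim: n => [|n IH] h; first by rewrite !addn0.
rewrite addnS cnt_out; last by apply: h; lia.
rewrite IH // => t ht; apply: h; lia.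
Qed.

Lemma cnt_mono k x y : x <= y -> cnt k x <= cnt k y.
Proof.
move=> hxy; have [d ->] : exists d, y = x + d by exists (y - x); lia.
elim: d => [|d IH]; first by rewrite addn0.
rewrite addnS cntS; lia.
Qed.

Lemma cnt_lt k x y : H9 k x -> x < y -> cnt k x < cnt k y.
Proof. move=> hx hxy; have := cnt_mono k hxy; rewrite cnt_in //. Qed.

Lemma cnt_inj k x y : H9 k x -> H9 k y -> cnt k x = cnt k y -> x = y.
Proof.
move=> hx hy e; case: (ltngtP x y) => // h.
- by have := cnt_lt hx h; lia.
- by have := cnt_lt hy h; lia.
Qed.

Lemma rank_cnt k x j : rank_below (H9 k) x j <-> j = cnt k x.
Proof.
split.
- move=> [s [us hs <-]].
  have P : perm_eq s (filter (hb k) (iota 0 x)).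
    apply: uniq_perm => //; first by rewrite filter_uniq // iota_uniq.
    move=> y; rewrite mem_filter mem_iota add0n; apply/idP/idP.
    + by move/hs => [h1 /hbP h2]; rewrite h1 h2.
    + by move/andP => [/hbP h1 h2]; apply/hs.
  by rewrite (perm_size P) size_filter.
- move=> ->; exists (filter (hb k) (iota 0 x)); split.
  + by rewrite filter_uniq // iota_uniq.
  + move=> y; rewrite mem_filter mem_iota add0n; split.
    * by move/andP => [/hbP h1 h2].
    * by move=> [h1 /hbP h2]; rewrite h1 h2.
  + by rewrite size_filter.
Qed.

Lemma elem_cnt k j x : elem (H9 k) j x <-> H9 k x /\ cnt k x = j.
Proof. rewrite /elem rank_cnt; split; move=> [h1 h2]; split => //. Qed.

Lemma T_in k x : 2 * k * (3 * k + 2) + 4 <= x -> H9 k x.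
Proof. by right. Qed.

Lemma rank_exists k j : exists2 x, H9 k x & cnt k x = j.
Proof.
set T := 2 * k * (3 * k + 2) + 4.
have ex : exists y, j < cnt k y.
  exists (T + j.+1); rewrite cnt_run_in; first lia.
  move=> t ht; apply: T_in; lia.
case: (ex_minnP ex) => y hy hmin.
case: y hy hmin => [|y] hy hmin; first by rewrite cnt0 in hy.
have hy' : cnt k y <= j by rewrite leqNgt; apply/negP => /hmin; lia.
move: hy; rewrite cntS; case: (boolP (hb k y)) => /= h hy.
- exists y; [exact/hbP | lia].
- lia.
Qed.


Notation mi k i := (i * (3*k+2) - 3 * (i %/ 2)).

Lemma Iik_le k i x : Iik k i x -> x <= i * (3*k+2).
Proof. move/IikE; lia. Qed.
Lemma Iik_ge k i x : Iik k i x -> mi k i <= x.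
Proof. move/IikE; lia. Qed.

Lemma gap_i k i x : 0 < k -> i <= 2 * k -> i * (3*k+2) < x < mi k i.+1 -> ~ H9 k x.
Proof.
move=> hk hi hx [[j hj Ij]|hT].
- case: (leqP j i) => hji.
  + have : j * (3*k+2) <= i * (3*k+2) by rewrite leq_mul2r hji orbT.
    have := Iik_le Ij; lia.
  + have := mi_mono k i.+1 j hk hji; have := Iik_ge Ij; lia.
- have := mi_mono k i.+1 (2*k+1) hk (_ : i.+1 <= 2 * k + 1); lia.
Qed.

Lemma gap_m k i : 0 < k -> 2 <= i <= 2 * k + 1 -> ~ H9 k (mi k i + 1).
Proof.
move=> hk hi [[j hj Ij]|hT].
- case: (ltngtP j i) => hji.
  + have := key k j i hji (_ : i <= 2 * k + 1); have := Iik_le Ij; lia.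
  + have := key k i j hji hj; have := Iik_ge Ij; lia.
  + subst j; move/IikE: Ij; lia.
- have := mi_mono k i (2*k+1) hk (_ : i <= 2 * k + 1); lia.
Qed.

Lemma H9_m k i : i <= 2 * k + 1 -> H9 k (mi k i).
Proof. move=> hi; left; exists i => //; apply/IikE; by left. Qed.

Lemma H9_int k i x : i <= 2 * k + 1 -> mi k i + 2 <= x <= i * (3*k+2) -> H9 k x.
Proof. move=> hi hx; left; exists i => //; apply/IikE; by right. Qed.

Lemma cnt_a k : 0 < k -> cnt k (3*k+2) = 1.
Proof.
move=> hk; rewrite (_ : 3*k+2 = 1 + (3*k+1)); last lia.
rewrite cnt_run_out; first rewrite cnt_in ?cnt0 //.
  by left; exists 0 => //; apply/IikE; left.
move=> t ht; apply: (@gap_i k 0) => //; lia.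
Qed.

Lemma cnt_b k : 0 < k -> cnt k (2*(3*k+2)-3) = 2.
Proof.
move=> hk; rewrite (_ : 2*(3*k+2)-3 = (3*k+2).+1 + (3*k - 2)); last lia.
rewrite cnt_run_out; first rewrite cnt_in ?cnt_a //.
  left; exists 1; first lia. apply/IikE; left; lia.
move=> t ht; apply: (@gap_i k 1) => //; lia.
Qed.

Lemma cnt_c k : 0 < k -> cnt k (2*(3*k+2)-1) = 3.
Proof.
move=> hk; rewrite (_ : 2*(3*k+2)-1 = (2*(3*k+2)-3).+1.+1); last lia.
rewrite cnt_out ?cnt_in ?cnt_b //.
- left; exists 2; first lia. apply/IikE; left; lia.
- have := @gap_m k 2 hk; rewrite (_ : 2 * (3 * k + 2) - 3 * (2 %/ 2) + 1 = (2 * (3 * k + 2) - 3).+1); last lia.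
  apply; lia.
Qed.

Lemma cnt_int k i x : 0 < k -> 2 <= i <= 2 * k + 1 -> mi k i + 2 <= x <= i * (3*k+2) + 1 ->
  cnt k x = cnt k (mi k i) + 1 + (x - mi k i - 2).
Proof.
move=> hk hi hx.
have e2 : cnt k (mi k i + 2) = (cnt k (mi k i)).+1.
  rewrite (_ : mi k i + 2 = (mi k i).+1.+1); last lia.
  rewrite cnt_out ?cnt_in //; first by apply: H9_m; lia.
  rewrite -addn1; exact: gap_m.
rewrite {1}(_ : x = mi k i + 2 + (x - mi k i - 2)); last lia.
rewrite cnt_run_in ?e2; first lia.
move=> t ht; apply: (@H9_int k i); lia.
Qed.

Lemma C_step k i : 0 < k -> 2 <= i <= 2 * k ->
  cnt k (mi k i.+1) = cnt k (mi k i) + 3 * (i %/ 2).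
Proof.
move=> hk hi.
have e1 := @cnt_int k i (i * (3*k+2) + 1) hk (_ : 2 <= i <= 2*k+1) (_ : mi k i + 2 <= i * (3*k+2) + 1 <= i * (3*k+2) + 1).
have hlt := key k i i.+1 (ltnSn i) (_ : i.+1 <= 2*k+1).
rewrite (_ : mi k i.+1 = i * (3*k+2) + 1 + (mi k i.+1 - i * (3*k+2) - 1)); last lia.
rewrite cnt_run_out ?e1; try lia.
move=> t ht; apply: (@gap_i k i) => //; lia.
Qed.

Lemma C_mod k i : 0 < k -> 2 <= i <= 2 * k + 1 -> cnt k (mi k i) %% 3 = 2.
Proof.
move=> hk hi; have [n en] : exists n, i = n + 2 by exists (i - 2); lia.
subst i.
have : n + 2 <= 2 * k + 1 by lia.
elim: n {hi} => [|n IH] hn.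
- rewrite (_ : mi k (0 + 2) = 2*(3*k+2)-3); last lia. by rewrite cnt_b.
- rewrite (_ : n.+1 + 2 = (n + 2).+1); last lia.
  rewrite C_step //; last lia. have := IH (_ : n + 2 <= 2 * k + 1). lia.
Qed.


Lemma block k x : 0 < k -> H9 k x -> cnt k x %% 3 = 1 ->
  exists y z, [/\ H9 k y, H9 k z, cnt k y = (cnt k x).+1, cnt k z = (cnt k x).+2 &
     [/\ x %% 3 <> y %% 3, x %% 3 <> z %% 3 & y %% 3 <> z %% 3]].
Proof.
move=> hk hx hc.
have consec : H9 k x.+1 -> H9 k x.+2 -> exists y z, [/\ H9 k y, H9 k z, cnt k y = (cnt k x).+1, cnt k z = (cnt k x).+2 &
     [/\ x %% 3 <> y %% 3, x %% 3 <> z %% 3 & y %% 3 <> z %% 3]].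
  move=> h1 h2; exists x.+1, x.+2; split => //; rewrite ?cnt_in //; split; lia.
case: (leqP (2 * k * (3 * k + 2) + 4) x) => hT.
  by apply: consec; apply: T_in; lia.
case: hx => [[j hj Ij]|]; last lia.
have [e0|[e1|hj2]] : j = 0 \/ j = 1 \/ 2 <= j by lia.
- subst j; move/IikE: Ij => Ij; have x0 : x = 0 by lia.
  by subst x; rewrite cnt0 in hc.
- subst j; move/IikE: Ij => Ij; have xa : x = 3 * k + 2 by lia.
  subst x; exists (2*(3*k+2)-3), (2*(3*k+2)-1).
  rewrite cnt_a // cnt_b // cnt_c //; split => //.
  + left; exists 2; first lia. apply/IikE; left; lia.
  + left; exists 2; first lia. apply/IikE; right; lia.
  + split; lia.
- move/IikE: Ij => [ex|hint].
  + have b1 : 2 <= j <= 2 * k + 1 by lia.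
    have := C_mod hk b1; rewrite -ex; lia.
  + have hj2k : j <= 2 * k.
      case: (ltngtP j (2*k+1)) => ej; [lia|lia|subst j; lia].
    have [h2|[h1|h0]] : x + 2 <= j * (3*k+2) \/ x + 1 = j * (3*k+2) \/ x = j * (3*k+2) by lia.
    * apply: consec; apply: (@H9_int k j); lia.
    * have b1 : 2 <= j <= 2 * k + 1 by lia.
      have b2 : mi k j + 2 <= x <= j * (3*k+2) + 1 by lia.
      have := @cnt_int k j x hk b1 b2.
      have := C_mod hk b1. lia.
    * have b1 : 2 <= j <= 2 * k + 1 by lia.
      have b2 : mi k j + 2 <= x <= j * (3*k+2) + 1 by lia.
      have b3 : 2 <= j <= 2 * k by lia.
      have b4 : 2 <= j.+1 <= 2 * k + 1 by lia.
      have ecx := @cnt_int k j x hk b1 b2.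
      have ecy := C_step hk b3.
      exists (mi k j.+1), (mi k j.+1).+2.
      have Hy : H9 k (mi k j.+1) by apply: H9_m; lia.
      have Hz : H9 k (mi k j.+1).+2 by apply: (@H9_int k j.+1); lia.
      have gm := @gap_m k j.+1 hk b4.
      rewrite addn1 in gm.
      split => //.
      -- lia.
      -- rewrite cnt_out ?cnt_in //; try lia.
      -- split; lia.
Qed.


Lemma H9a k : 0 < k -> H9 k (3*k+2).
Proof. move=> hk; left; exists 1; first lia. apply/IikE; left; lia. Qed.
Lemma H9b k : 0 < k -> H9 k (2*(3*k+2)-3).
Proof. move=> hk; left; exists 2; first lia. apply/IikE; left; lia. Qed.
Lemma H9c k : 0 < k -> H9 k (2*(3*k+2)-1).
Proof. move=> hk; left; exists 2; first lia. apply/IikE; right; lia. Qed.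

Lemma gens k : 0 < k -> forall y,
  (exists2 i, 1 <= i <= 3 & elem (H9 k) i y) <-> Sabc k y.
Proof.
move=> hk y; split.
- move=> [i hi /elem_cnt [hy cy]].
  have [e|[e|e]] : i = 1 \/ i = 2 \/ i = 3 by lia.
  + left; apply: cnt_inj hy (H9a hk) _; rewrite cnt_a //; lia.
  + right; left; apply: cnt_inj hy (H9b hk) _; rewrite cnt_b //; lia.
  + right; right; apply: cnt_inj hy (H9c hk) _; rewrite cnt_c //; lia.
- case=> [->|[->|->]].
  + exists 1 => //; apply/elem_cnt; split; [exact: H9a | exact: cnt_a].
  + exists 2 => //; apply/elem_cnt; split; [exact: H9b | exact: cnt_b].
  + exists 3 => //; apply/elem_cnt; split; [exact: H9c | exact: cnt_c].
Qed.

Theorem lemma4p9 (k : nat) (hk : 0 < k) :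
  let a := 3 * k + 2 in
  let b := 2 * a - 3 in
  let c := 2 * a - 1 in
  let G := gen (fun x => x = a \/ x = b \/ x = c) in
  [/\ (forall x, G x <-> exists q r s, r <= q /\ x = (s + 2 * q) * a - 3 * q + 2 * r),
      (forall i, i <= 2 * k -> forall x y, Iik k i x -> Iik k i.+1 y -> x < y),
      (forall x, G x <-> H9 k x)
    & perm_num_semigroup 3 (H9 k)].
Proof.
move=> a b c G; split.
- exact: part1.
- exact: part2.
- move=> x; exact: part3.
- split.
  + split; last by exists (2 * k * (3 * k + 2) + 4) => x hx; right.
    split; first by left; exists 0 => //; apply/IikE; left; lia.
    move=> x y /(part3 k x hk) hx /(part3 k y hk) hy; apply/(part3 k _ hk); exact: gen_add.
  + move=> x; rewrite -(part3 k x hk); apply: gen_ext => y; rewrite gens //.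
  + move=> m r hr.
    have [x1 hx1 cx1] := rank_exists k (m * 3 + 1).
    have c1 : cnt k x1 %% 3 = 1 by rewrite cx1; lia.
    have [y [z [hy hz cy cz [d1 d2 d3]]]] := block hk hx1 c1.
    have key : forall i x, 1 <= i <= 3 -> elem (H9 k) (m * 3 + i) x ->
        (i = 1 /\ x = x1) \/ (i = 2 /\ x = y) \/ (i = 3 /\ x = z).
      move=> i x hi /elem_cnt [hx cx].
      have [e|[e|e]] : i = 1 \/ i = 2 \/ i = 3 by lia.
      * left; split => //; apply: cnt_inj hx hx1 _; lia.
      * right; left; split => //; apply: cnt_inj hx hy _; lia.
      * right; right; split => //; apply: cnt_inj hx hz _; lia.
    have E1 : elem (H9 k) (m * 3 + 1) x1 by apply/elem_cnt.
    have E2 : elem (H9 k) (m * 3 + 2) y by apply/elem_cnt; split => //; lia.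
    have E3 : elem (H9 k) (m * 3 + 3) z by apply/elem_cnt; split => //; lia.
    have uniq_i : forall i0 x0, x0 %% 3 = r -> (i0 = 1 /\ x0 = x1) \/ (i0 = 2 /\ x0 = y) \/ (i0 = 3 /\ x0 = z) ->
       forall i', (1 <= i' <= 3) /\ (exists2 x, elem (H9 k) (m * 3 + i') x & x %% 3 = r) -> i0 = i'.
      move=> i0 x0 hr0 h0 i' [hi' [x' ex' hr']].
      have := key _ _ hi' ex'. lia.
    have [e|[e|e]] : r = x1 %% 3 \/ r = y %% 3 \/ r = z %% 3 by lia.
    * exists 1; split; first by split => //; exists x1.
      apply: (uniq_i 1 x1); [done | by left].
    * exists 2; split; first by split => //; exists y.
      apply: (uniq_i 2 y); [done | by right; left].
    * exists 3; split; first by split => //; exists z.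
      apply: (uniq_i 3 z); [done | by right; right].
Qed.
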